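(* Let $V$ be a finite dimensional vector space over a field $\mathbb{K}$ of characteristic zero, and let $u,v\in\widehat L(V)$ satisfy $|\exp(u)|=|\exp(v)|\in|\widehat T(V)|$. Then $|u^m|=|v^m|\in|\widehat T(V)|$ for all $m\ge0$.
   Context: $\widehat T(V)=\prod_{m\ge0}V^{\otimes m}$ is the completed tensor algebra and $\widehat L(V)\subset\widehat T(V)$ the completed free Lie algebra on $V$ (the primitive elements). $|\widehat T(V)|$ is the quotient of $\widehat T(V)$ by the closure of the span of commutators $ab-ba$, with projection $x\mapsto|x|$. *)

(* Defs.v *)
(* Model: V = K^n with basis e_0..e_{n-1} (indices 'I_n).
   Words = seq 'I_n; the completed tensor algebra \hat T(V) = prod_m V^{(x)m}
   is identified with formal noncommutative power series seq 'I_n -> K,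
   the coefficient of the word i1..im being the coordinate in V^{(x)m}
   on e_{i1} (x) ... (x) e_{im}. *)
From mathcomp Require Import all_boot all_order all_algebra.
Set Implicit Arguments. Unset Strict Implicit. Unset Printing Implicit Defensive.
Import Order.TTheory GRing.Theory Num.Theory.
Local Open Scope ring_scope.

Section Series.
Variables (K : fieldType) (n : nat).

Definition word := seq 'I_n.
Definition ser := word -> K.

Definition ser_one : ser := fun w => if w == [::] then 1 else 0.
Definition ser_add (a b : ser) : ser := fun w => a w + b w.
Definition ser_sub (a b : ser) : ser := fun w => a w - b w.
Definition ser_mul (a b : ser) : ser :=
  fun w => \sum_(i < (size w).+1) a (take i w) * b (drop i w).
Fixpoint ser_pow (a : ser) (m : nat) : ser :=
  if m is m'.+1 then ser_mul a (ser_pow a m') else ser_one.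
(* exp(u) = sum_k u^k / k!  (for u with zero constant term, only the terms
   k <= |w| contribute to the coefficient of the word w) *)
Definition ser_exp (u : ser) : ser :=
  fun w => \sum_(k < (size w).+1) (k`!%:R)^-1 * ser_pow u k w.

Fixpoint shuffle_count (u v w : word) : nat :=
  match w with
  | [::] => ((u == [::]) && (v == [::]))%N
  | c :: w' =>
      ((if u is a :: u' then ((a == c) * shuffle_count u' v w')%N else 0%N)
     + (if v is b :: v' then ((b == c) * shuffle_count u v' w')%N else 0%N))%N
  end.

(* shuffle coproduct Delta : \hat T(V) -> \hat T(V) \hat(x) \hat T(V),
   an element of the completed tensor product being given by its
   coefficients on pairs of words *)
Definition coprod (x : ser) (u v : word) : K :=
  \sum_(t : (size u + size v).-tuple 'I_n) x (val t) * (shuffle_count u v (val t))%:R.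

(* \hat L(V): the primitive elements, Delta x = x (x) 1 + 1 (x) x *)
Definition primitive (x : ser) : Prop :=
  forall u v : word,
    coprod x u v = (if v == [::] then x u else 0) + (if u == [::] then x v else 0).

Definition comm_span (z : ser) : Prop :=
  exists s : seq (ser * ser),
    z = (fun w => \sum_(p <- s) (ser_mul p.1 p.2 w - ser_mul p.2 p.1 w)).

(* closure in the (degree-filtration / product) topology of \hat T(V) *)
Definition in_closure (P : ser -> Prop) (z : ser) : Prop :=
  forall N : nat, exists s : ser, P s /\ forall w : word, (size w < N)%N -> z w = s w.

Definition cyc_eq (x y : ser) : Prop := in_closure comm_span (ser_sub x y).

End Series.

(* Main.v *)
Require Import Defs.
From mathcomp Require Import all_boot all_order all_algebra.
From Stdlib Require Import FunctionalExtensionality.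
From mathcomp Require Import zify ring.
Set Implicit Arguments. Unset Strict Implicit. Unset Printing Implicit Defensive.
Import Order.TTheory GRing.Theory Num.Theory.
Local Open Scope ring_scope.

Section Main.
Variables (K : fieldType) (n : nat).
Local Notation word := (word n).
Local Notation ser := (ser K n).

Fixpoint wsum (L : nat) (F : word -> K) : K :=
  if L is L'.+1 then \sum_(c : 'I_n) wsum L' (fun a => F (c :: a)) else F [::].

Lemma wsum_ext L F G : (forall x, size x = L -> F x = G x) -> wsum L F = wsum L G.
Proof.
elim: L F G => [|L IH] F G H /=; first by rewrite H.
apply: eq_bigr => c _; apply: IH => x sx; apply: H; by rewrite /= sx.
Qed.

Lemma wsumD L F G : wsum L (fun x => F x + G x) = wsum L F + wsum L G.
Proof.
elim: L F G => [|L IH] F G //=; rewrite -big_split /=; apply: eq_bigr => c _; exact: IH.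
Qed.

Lemma wsumZ L c F : wsum L (fun x => c * F x) = c * wsum L F.
Proof.
elim: L F => [|L IH] F //=; rewrite mulr_sumr; apply: eq_bigr => d _; exact: IH.
Qed.

Lemma wsumZr L c F : wsum L (fun x => F x * c) = wsum L F * c.
Proof. rewrite mulrC -wsumZ; apply: wsum_ext => x _; exact: mulrC. Qed.

Lemma wsum0 L : wsum L (fun _ => 0) = 0.
Proof. by elim: L => [|L IH] //=; rewrite big1. Qed.

Lemma wsumN L F : wsum L (fun x => - F x) = - wsum L F.
Proof. by rewrite -mulN1r -wsumZ; apply: wsum_ext => x _; rewrite mulN1r. Qed.

Lemma wsumB L F G : wsum L (fun x => F x - G x) = wsum L F - wsum L G.
Proof. by rewrite wsumD wsumN. Qed.

Lemma wsum_sum (I : Type) (r : seq I) (P : pred I) L (F : I -> word -> K) :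
  wsum L (fun x => \sum_(i <- r | P i) F i x) = \sum_(i <- r | P i) wsum L (F i).
Proof.
elim: r => [|i r IH]; first by rewrite big_nil; under wsum_ext do rewrite big_nil; rewrite wsum0.
rewrite big_cons; under wsum_ext do rewrite big_cons.
case: (P i); last by rewrite IH.
by rewrite wsumD IH.
Qed.

Lemma wsum_exch L M (F : word -> word -> K) :
  wsum L (fun x => wsum M (F x)) = wsum M (fun y => wsum L (fun x => F x y)).
Proof.
elim: L F => [|L IH] F /=; first by [].
rewrite (eq_bigr (fun c => wsum M (fun y => wsum L (fun x => F (c :: x) y)))); last first.
  by move=> c _; rewrite IH.
by rewrite -wsum_sum.
Qed.

Lemma wsum_delta L F (v : word) :
  wsum L (fun x => F x * (x == v)%:R) = if size v == L then F v else 0.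
Proof.
elim: L F v => [|L IH] F v /=.
  by case: v => [|c v] /=; rewrite ?eqxx ?mulr1 // mulr0.
case: v => [|d v] /=.
  rewrite big1 // => c _; rewrite -(wsum0 L); apply: wsum_ext => x _; by rewrite mulr0.
rewrite eqSS (bigD1 d) //= big1 ?addr0 => [|c cd].
  by rewrite -(IH (fun a => F (d :: a))); apply: wsum_ext => x _; rewrite eqseq_cons eqxx.
rewrite -(wsum0 L); apply: wsum_ext => x _; by rewrite eqseq_cons (negbTE cd) mulr0.
Qed.

Lemma wsum_deltal L F (v : word) :
  wsum L (fun x => (x == v)%:R * F x) = if size v == L then F v else 0.
Proof. rewrite -wsum_delta; apply: wsum_ext => x _; exact: mulrC. Qed.

Lemma wsum_split m L (G : word -> word -> K) : (m <= L)%N ->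
  wsum L (fun x => G (take m x) (drop m x)) = wsum m (fun x1 => wsum (L - m) (G x1)).
Proof.
elim: m L G => [|m IH] L G hm /=.
  by rewrite subn0; apply: wsum_ext => x _; rewrite take0 drop0.
case: L hm => [|L] // hm /=; apply: eq_bigr => c _.
by rewrite subSS -IH.
Qed.


Definition der (c : 'I_n) (a : ser) : ser := fun x => a (c :: x).

Lemma mul_nil (a b : ser) : ser_mul a b [::] = a [::] * b [::].
Proof. by rewrite /ser_mul big_ord1. Qed.

Lemma mul_cons (a b : ser) c w :
  ser_mul a b (c :: w) = a [::] * b (c :: w) + ser_mul (der c a) b w.
Proof. by rewrite /ser_mul /= big_ord_recl. Qed.

Lemma mulDl (f g h : ser) w :
  ser_mul (fun x => f x + g x) h w = ser_mul f h w + ser_mul g h w.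
Proof. by rewrite /ser_mul -big_split /=; apply: eq_bigr => i _; rewrite mulrDl. Qed.

Lemma mulZl k (f h : ser) w :
  ser_mul (fun x => k * f x) h w = k * ser_mul f h w.
Proof. by rewrite /ser_mul mulr_sumr; apply: eq_bigr => i _; rewrite mulrA. Qed.

Lemma mulDr (f g h : ser) w :
  ser_mul h (fun x => f x + g x) w = ser_mul h f w + ser_mul h g w.
Proof. by rewrite /ser_mul -big_split /=; apply: eq_bigr => i _; rewrite mulrDr. Qed.

Lemma mulZr k (f h : ser) w :
  ser_mul h (fun x => k * f x) w = k * ser_mul h f w.
Proof. by rewrite /ser_mul mulr_sumr; apply: eq_bigr => i _; rewrite mulrCA. Qed.

Lemma der_mul c (a b : ser) :
  der c (ser_mul a b) = (fun x => a [::] * der c b x + ser_mul (der c a) b x).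
Proof. by apply: functional_extensionality => x; rewrite /der mul_cons. Qed.

Lemma mulA (a b d : ser) w :
  ser_mul (ser_mul a b) d w = ser_mul a (ser_mul b d) w.
Proof.
elim: w a b d => [|c w IH] a b d.
  by rewrite !mul_nil mulrA.
rewrite !mul_cons der_mul mulDl mulZl IH mul_nil mulrDr mulrA.
by rewrite addrA.
Qed.

Lemma mul1s (b : ser) w : ser_mul (@ser_one K n) b w = b w.
Proof.
case: w => [|c w]; first by rewrite mul_nil /ser_one eqxx mul1r.
rewrite mul_cons /ser_one eqxx mul1r.
rewrite /ser_mul big1 ?addr0 // => i _; by rewrite /der /= mul0r.
Qed.

Lemma pow_add (u : ser) l m w :
  ser_pow u (l + m) w = ser_mul (ser_pow u l) (ser_pow u m) w.
Proof.
elim: l w => [|l IH] w /=; first by rewrite mul1s.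
have -> : ser_pow u (l + m) = ser_mul (ser_pow u l) (ser_pow u m).
  by apply: functional_extensionality => x; rewrite IH.
by rewrite mulA.
Qed.

Lemma pow_small (u : ser) : u [::] = 0 -> forall j w, (size w < j)%N -> ser_pow u j w = 0.
Proof.
move=> u0; elim=> [|j IH] w //= hw.
rewrite /ser_mul big1 // => i _.
case: (nat_of_ord i =P 0%N) => [->|/eqP i0]; first by rewrite take0 u0 mul0r.
rewrite IH ?mulr0 // size_drop; move/eqP: i0 => i0; have := ltn_ord i; lia.
Qed.


Lemma tuple_wsum L (F : word -> K) :
  \sum_(t : L.-tuple 'I_n) F (val t) = wsum L F.
Proof.
elim: L F => [|L IH] F /=.
  rewrite (eq_bigr (fun _ => F [::])); last by move=> t _; rewrite (size0nil (size_tuple t)).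
  by rewrite sumr_const card_tuple expn0.
rewrite (reindex (fun p : 'I_n * L.-tuple 'I_n => [tuple of p.1 :: p.2])) /=; last first.
  exists (fun t : L.+1.-tuple 'I_n => (thead t, [tuple of behead t])).
    by move=> [c t] _ /=; congr (_, _); apply: val_inj.
  by move=> t _; rewrite /= -tuple_eta.
rewrite -(pair_big xpredT xpredT (fun c (t : L.-tuple 'I_n) => F (c :: val t))) /=.
apply: eq_bigr => c _; rewrite -IH.
by [].
Qed.

Local Notation sh := (@shuffle_count n).

Lemma sh_size p a x : sh p a x != 0%N -> size x = (size p + size a)%N.
Proof.
elim: x p a => [|c x IH] p a /=.
  by case: p; case: a.
case: p => [|d p]; case: a => [|e a] //=; rewrite ?add0n ?addn0.
- by case: (e == c) => //=; rewrite mul1n => /IH /= ->.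
- by case: (d == c) => //=; rewrite mul1n => /IH /= ->; rewrite addn0.
rewrite addn_eq0 negb_and; case/orP.
  by case: (d == c) => //=; rewrite mul1n => /IH /= ->.
by case: (e == c) => //=; rewrite mul1n => /IH /= ->; rewrite addnS.
Qed.

Lemma sh_nil_l a x : sh [::] a x = (a == x).
Proof.
elim: x a => [|c x IH] a /=; first by [].
case: a => [|e a] //=; by rewrite IH eqseq_cons add0n; case: (e == c); case: (a == x).
Qed.

Lemma sh_nil_r p x : sh p [::] x = (p == x).
Proof.
elim: x p => [|c x IH] p /=; first by case: p.
case: p => [|e p] //=; by rewrite addn0 IH eqseq_cons; case: (e == c); case: (p == x).
Qed.

Definition D (z : ser) (p a : word) : K :=
  wsum (size p + size a) (fun x => z x * (sh p a x)%:R).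

Lemma coprodE z p a : coprod z p a = D z p a.
Proof. by rewrite /coprod /D (tuple_wsum _ (fun x => z x * (sh p a x)%:R)). Qed.

Lemma D_nil_l z a : D z [::] a = z a.
Proof.
rewrite /D /= (wsum_ext (G := fun x => z x * (x == a)%:R)) ?wsum_delta ?eqxx //.
by move=> x _; rewrite sh_nil_l eq_sym.
Qed.

Lemma D_nil_r z p : D z p [::] = z p.
Proof.
rewrite /D /= addn0 (wsum_ext (G := fun x => z x * (x == p)%:R)) ?wsum_delta ?eqxx //.
by move=> x _; rewrite sh_nil_r eq_sym.
Qed.


Lemma take_eq_nil (p : word) (i : 'I_(size p)) : (take (bump 0 i) p == [::]) = false.
Proof. by case: p i => [|d p] [i hi]. Qed.

Lemma sh_cat p a x1 x2 :
  sh p a (x1 ++ x2) =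
  (\sum_(i < (size p).+1) \sum_(j < (size a).+1)
     sh (take i p) (take j a) x1 * sh (drop i p) (drop j a) x2)%N.
Proof.
elim: x1 p a => [|c x1 IH] p a /=.
  rewrite big_ord_recl big_ord_recl /= !take0 !drop0 /= mul1n.
  rewrite big1 ?addn0; last by move=> j _; rewrite take_eq_nil.
  rewrite big1 ?addn0 //; move=> i _; apply: big1 => j _.
  by rewrite take_eq_nil.
under eq_bigr do under eq_bigr do rewrite mulnDl.
under eq_bigr do rewrite big_split /=.
rewrite big_split /=; congr (_ + _)%N.
  case: p => [|d p] /=.
    by rewrite big1 // => i _; rewrite big1.
  rewrite big_ord_recl /= big1 ?add0n; last by [].
  rewrite IH big_distrr /=; apply: eq_bigr => i _; rewrite big_distrr /=.
  by apply: eq_bigr => j _; rewrite mulnA.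
case: a => [|e a] /=.
  by rewrite big1 // => i _; rewrite big1.
rewrite IH big_distrr /=; apply: eq_bigr => i _.
rewrite [RHS]big_ord_recl /= mul0n add0n big_distrr /=.
by apply: eq_bigr => j _; rewrite mulnA.
Qed.


Lemma wsum_sh0 m p a F : (size p + size a)%N != m ->
  wsum m (fun x => F x * (sh p a x)%:R) = 0.
Proof.
move=> hm; rewrite -(wsum0 m); apply: wsum_ext => x sx.
case: (sh p a x =P 0%N) => [->|/eqP h]; first by rewrite mulr0.
by move: hm; rewrite -(sh_size h) sx eqxx.
Qed.

Lemma D_mul (y z : ser) p a :
  D (ser_mul y z) p a =
  \sum_(i < (size p).+1) \sum_(j < (size a).+1)
     D y (take i p) (take j a) * D z (drop i p) (drop j a).
Proof.
rewrite /D; set L := (size p + size a)%N.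
rewrite (wsum_ext (G := fun x => \sum_(m < L.+1)
   y (take m x) * z (drop m x) * (sh p a (take m x ++ drop m x))%:R)); last first.
  move=> x sx; rewrite /ser_mul sx big_distrl /=; apply: eq_bigr => m _.
  by rewrite cat_take_drop.
rewrite wsum_sum.
rewrite (eq_bigr (fun m : 'I_L.+1 => wsum m (fun x1 => wsum (L - m)
    (fun x2 => y x1 * z x2 * (sh p a (x1 ++ x2))%:R)))); last first.
  move=> m _; rewrite -wsum_split //; rewrite -ltnS; exact: ltn_ord.
have Hm : forall m : nat,
  wsum m (fun x1 => wsum (L - m) (fun x2 => y x1 * z x2 * (sh p a (x1 ++ x2))%:R)) =
  \sum_(i < (size p).+1) \sum_(j < (size a).+1)
    wsum m (fun x1 => y x1 * (sh (take i p) (take j a) x1)%:R) *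
    wsum (L - m) (fun x2 => z x2 * (sh (drop i p) (drop j a) x2)%:R).
  move=> m.
  rewrite (wsum_ext (G := fun x1 => \sum_(i < (size p).+1) \sum_(j < (size a).+1)
    (y x1 * (sh (take i p) (take j a) x1)%:R) *
    wsum (L - m) (fun x2 => z x2 * (sh (drop i p) (drop j a) x2)%:R))).
    rewrite wsum_sum; apply: eq_bigr => i _; rewrite wsum_sum; apply: eq_bigr => j _.
    by rewrite wsumZr.
  move=> x1 _.
  rewrite (wsum_ext (G := fun x2 => \sum_(i < (size p).+1) \sum_(j < (size a).+1)
    (y x1 * (sh (take i p) (take j a) x1)%:R) * (z x2 * (sh (drop i p) (drop j a) x2)%:R))).
    rewrite wsum_sum; apply: eq_bigr => i _; rewrite wsum_sum; apply: eq_bigr => j _.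
    by rewrite wsumZ.
  move=> x2 _; rewrite sh_cat natr_sum mulr_sumr; apply: eq_bigr => i _.
  rewrite natr_sum mulr_sumr; apply: eq_bigr => j _; rewrite natrM.
  by rewrite mulrACA.
under eq_bigr do rewrite Hm.
rewrite exchange_big; apply: eq_bigr => i _; rewrite exchange_big; apply: eq_bigr => j _ /=.
have hi : (i <= size p)%N by rewrite -ltnS.
have hj : (j <= size a)%N by rewrite -ltnS.
have hk : (i + j < L.+1)%N by rewrite ltnS /L leq_add.
rewrite (bigD1 (Ordinal hk)) //= big1 ?addr0 => [|m hm].
  rewrite !size_takel // !size_drop; congr (_ * wsum _ _); rewrite /L; lia.
rewrite wsum_sh0 ?mul0r // !size_takel //; apply/eqP => hm'.
by move: hm; rewrite -val_eqE /= hm' eqxx.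
Qed.


Lemma primD (u : ser) : primitive u -> forall p a,
  D u p a = (if a == [::] then u p else 0) + (if p == [::] then u a else 0).
Proof. by move=> hu p a; rewrite -coprodE hu. Qed.

Lemma prim0 (u : ser) : primitive u -> u [::] = 0.
Proof.
move=> hu; have := primD hu [::] [::]; rewrite D_nil_l /=.
by rewrite -{1}(addr0 (u [::])) => /addrI <-.
Qed.

Lemma D_prim_mul (u y : ser) : primitive u -> forall p a,
  D (ser_mul u y) p a =
  \sum_(i < (size p).+1) u (take i p) * D y (drop i p) a +
  \sum_(j < (size a).+1) u (take j a) * D y p (drop j a).
Proof.
move=> hu p a; rewrite D_mul.
under eq_bigr do under eq_bigr do rewrite (primD hu) mulrDl.
under eq_bigr do rewrite big_split /=.
rewrite big_split /=; congr (_ + _).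
  apply: eq_bigr => i _; rewrite big_ord_recl /= take0 drop0 eqxx big1 ?addr0 //.
  by move=> j _; rewrite take_eq_nil mul0r.
rewrite exchange_big /=; apply: eq_bigr => j _.
rewrite big_ord_recl /= take0 drop0 eqxx big1 ?addr0 //.
by move=> i _; rewrite take_eq_nil mul0r.
Qed.

Lemma D_one p a : D (@ser_one K n) p a = (@ser_one K n p) * (@ser_one K n a).
Proof.
rewrite /D /ser_one (wsum_ext (G := fun x => (x == [::])%:R * (sh p a x)%:R)); last first.
  by move=> x _; case: (x == [::]).
rewrite wsum_deltal /=.
case: p => [|d p]; case: a => [|e a] //=; by rewrite ?mulr1 ?mulr0 ?mul0r.
Qed.

Lemma D_pow (u : ser) : primitive u -> forall j p a,
  D (ser_pow u j) p a =
  \sum_(l < j.+1) ('C(j, l))%:R * (ser_pow u l p * ser_pow u (j - l) a).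
Proof.
move=> hu; elim=> [|j IH] p a.
  by rewrite big_ord1 /= D_one mul1r.
rewrite [ser_pow u j.+1]/= D_prim_mul //.
under eq_bigr do rewrite IH mulr_sumr.
under [X in _ + X = _]eq_bigr do rewrite IH mulr_sumr.
rewrite exchange_big [X in _ + X = _]exchange_big /=.
have S1 : \sum_(l < j.+1) \sum_(i < (size p).+1)
   u (take i p) * ('C(j, l)%:R * (ser_pow u l (drop i p) * ser_pow u (j - l) a)) =
   \sum_(l < j.+1) 'C(j, l)%:R * (ser_pow u l.+1 p * ser_pow u (j - l) a).
  apply: eq_bigr => l _; rewrite [ser_pow u l.+1]/= /ser_mul mulr_suml mulr_sumr.
  apply: eq_bigr => i _; by rewrite !mulrA [u _ * _]mulrC.
have S2 : \sum_(l < j.+1) \sum_(i < (size a).+1)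
   u (take i a) * ('C(j, l)%:R * (ser_pow u l p * ser_pow u (j - l) (drop i a))) =
   \sum_(l < j.+1) 'C(j, l)%:R * (ser_pow u l p * ser_pow u (j.+1 - l) a).
  apply: eq_bigr => l _; have hl : (l <= j)%N by rewrite -ltnS.
  rewrite (subSn hl) [ser_pow u (j - l).+1]/= /ser_mul.
  rewrite !mulr_sumr; apply: eq_bigr => i _.
  by rewrite mulrCA; congr (_ * _); rewrite mulrCA.
rewrite S1 S2.
rewrite [RHS]big_ord_recl /= bin0 ?subn0 [in RHS](eq_bigr (fun l : 'I_j.+1 =>
  'C(j, l.+1)%:R * (ser_pow u l.+1 p * ser_pow u (j - l) a) +
  'C(j, l)%:R * (ser_pow u l.+1 p * ser_pow u (j - l) a))); last first.
  by move=> l _; rewrite /bump /= add1n binS natrD mulrDl subSS.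
rewrite [in RHS]big_split /= [in X in _ = _ + X]addrC [RHS]addrCA; congr (_ + _).
rewrite big_ord_recl /= bin0 ?subn0; congr (_ + _).
rewrite [in RHS]big_ord_recr /= bin_small // mul0r addr0.
apply: eq_bigr => l _; rewrite /bump /= add1n subSS //.
Qed.


Fixpoint masks (m : nat) : seq bitseq :=
  if m is m'.+1 then map (cons true) (masks m') ++ map (cons false) (masks m')
  else [:: [::]].

Lemma size_masks m b : b \in masks m -> size b = m.
Proof.
elim: m b => [|m IH] b /=; first by rewrite inE => /eqP ->.
by rewrite mem_cat => /orP [] /mapP [b' /IH <- ->].
Qed.

Lemma sum_pred1 (c : 'I_n) (f : 'I_n -> K) : \sum_(e : 'I_n) (e == c)%:R * f e = f c.
Proof.
rewrite (bigD1 c) //= eqxx mul1r big1 ?addr0 // => e /negbTE ->; by rewrite mul0r.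
Qed.

Lemma sh_cons p a c x : sh p a (c :: x) =
  ((if p is d :: p' then (d == c) * sh p' a x else 0) +
   (if a is e :: a' then (e == c) * sh p a' x else 0))%N.
Proof. by []. Qed.

Lemma mask_lemma (x p : word) (G : word -> K) :
  \sum_(b <- masks (size x)) (mask b x == p)%:R * G (mask (map negb b) x) =
  wsum (size x - size p) (fun a => (sh p a x)%:R * G a).
Proof.
elim: x p G => [|c x IH] p G.
  by rewrite /= big_seq1 /=; case: p => [|d p] /=; rewrite ?eqxx.
rewrite [size _]/= [masks _]/= big_cat !big_map /=.
rewrite (IH p (fun a => G (c :: a))).
case: p => [|d p].
  rewrite big1 ?add0r; last by move=> b _; rewrite mul0r.
  rewrite [size [::]]/= !subn0 [in RHS]/=.
  transitivity (\sum_(e : 'I_n) (e == c)%:R * wsum (size x) (fun a => (sh [::] a x)%:R * G (e :: a))).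
    by rewrite sum_pred1.
  apply: eq_bigr => e _; rewrite -wsumZ; apply: wsum_ext => a _; by rewrite add0n natrM mulrA.
rewrite [size (d :: p)]/= subSS.
under eq_bigr do rewrite eqseq_cons -mulnb natrM -mulrA.
rewrite -mulr_sumr IH.
rewrite [RHS](wsum_ext (G := fun a => (d == c)%:R * ((sh p a x)%:R * G a) +
   ((if a is e :: a' then (e == c) * sh (d :: p) a' x else 0)%N)%:R * G a)); last first.
  by move=> a _; rewrite natrD natrM mulrDl mulrA.
rewrite wsumD wsumZ eq_sym; congr (_ + _).
rewrite subnS; case E: (size x - size p)%N => [|M] /=.
  case: (sh (d :: p) [::] x =P 0%N) => [->|/eqP/sh_size]; first by rewrite !mul0r.
  by rewrite /= addn0 => hx; move: E; rewrite hx; lia.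
transitivity (\sum_(e : 'I_n) (e == c)%:R * wsum M (fun a => (sh (d :: p) a x)%:R * G (e :: a))).
  by rewrite sum_pred1.
apply: eq_bigr => e _; rewrite -wsumZ; apply: wsum_ext => a _; by rewrite natrM mulrA.
Qed.


Fixpoint outs (k : nat) (x : word) : seq word :=
  if k is k'.+1 then
    [seq mask b x ++ t | b <- masks (size x), t <- outs k' (mask (map negb b) x)]
  else (if x is [::] then [:: [::]] else [::]).

Definition cnt k (x w : word) : K := (count_mem w (outs k x))%:R.

Definition Psi k (z : ser) : ser := fun w => wsum (size w) (fun x => z x * cnt k x w).

Lemma cat_eq (m t w : word) :
  (m ++ t == w) = (m == take (size m) w) && (t == drop (size m) w).
Proof.
apply/eqP/andP => [<-|[/eqP Hm /eqP Ht]].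
  by rewrite take_size_cat // drop_size_cat.
by rewrite {1}Hm Ht cat_take_drop.
Qed.

Lemma take_sum (m w : word) (f : nat -> K) :
  (m == take (size m) w)%:R * f (size m) =
  \sum_(i < (size w).+1) (m == take i w)%:R * f i.
Proof.
case: (leqP (size m) (size w)) => h.
  have hi : (size m < (size w).+1)%N by [].
  rewrite (bigD1 (Ordinal hi)) //= big1 ?addr0 // => i hne.
  case: (m =P take i w) => [E|]; last by rewrite mul0r.
  move: hne; rewrite -val_eqE /= E size_takel ?eqxx //.
  by rewrite -ltnS.
rewrite big1; last first.
  move=> i _; case: (m =P take i w) => [E|]; last by rewrite mul0r.
  by have := congr1 size E; rewrite size_take_min; have := ltn_ord i; lia.
case: (m =P take (size m) w) => [E|]; last by rewrite mul0r.
by have := congr1 size E; rewrite size_take_min; lia.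
Qed.

Lemma count_cat_pref (m w : word) (T : seq word) :
  (count_mem w [seq m ++ t | t <- T])%:R =
  (m == take (size m) w)%:R * (count_mem (drop (size m) w) T)%:R :> K.
Proof.
elim: T => [|t T IH] /=; first by rewrite mulr0.
rewrite natrD IH natrD mulrDr cat_eq; congr (_ + _).
by case: (m == _); case: (t == _); rewrite ?mulr1 ?mulr0.
Qed.

Lemma count_outsS k x w :
  cnt k.+1 x w = \sum_(i < (size w).+1)
     wsum (size x - i) (fun a => (sh (take i w) a x)%:R * cnt k a (drop i w)).
Proof.
rewrite /cnt /= count_flatten sumnE big_map natr_sum big_map.
under eq_bigr => b _ do rewrite count_cat_pref
  (take_sum _ _ (fun i => (count_mem (drop i w) (outs k (mask (map negb b) x)))%:R)).
rewrite exchange_big /=; apply: eq_bigr => i _.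
have hi : (i <= size w)%N by rewrite -ltnS.
by have := mask_lemma x (take i w) (fun a => (count_mem (drop i w) (outs k a))%:R); rewrite size_takel.
Qed.


Lemma outs_size k x t : t \in outs k x -> size t = size x.
Proof.
elim: k x t => [|k IH] x t /=.
  by case: x => [|c x] //; rewrite inE => /eqP ->.
case/allpairsPdep => b [t' [hb ht' ->]].
rewrite size_cat (IH _ _ ht') !size_mask ?size_map ?(size_masks hb) //.
by rewrite count_map -(size_masks hb) -(count_predC id b); congr (_ + _)%N; apply: eq_count.
Qed.


Lemma cnt0 k x w : size x != size w -> cnt k x w = 0.
Proof.
move=> h; rewrite /cnt; suff -> : count_mem w (outs k x) = 0%N by [].
apply/count_memPn; apply: contra h => /outs_size ->; by [].
Qed.

Lemma Psi_rec k z w :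
  Psi k.+1 z w = \sum_(i < (size w).+1) Psi k (D z (take i w)) (drop i w).
Proof.
rewrite /Psi.
rewrite (wsum_ext (G := fun x => \sum_(i < (size w).+1) wsum (size w - i)
   (fun a => z x * ((sh (take i w) a x)%:R * cnt k a (drop i w))))); last first.
  move=> x sx; rewrite count_outsS mulr_sumr sx; apply: eq_bigr => i _; by rewrite wsumZ.
rewrite wsum_sum; apply: eq_bigr => i _; rewrite wsum_exch size_drop.
have hi : (i <= size w)%N by rewrite -ltnS.
apply: wsum_ext => a sa; rewrite /D -wsumZr (size_takel hi) sa.
have -> : (i + (size w - i))%N = size w by rewrite subnKC.
by apply: wsum_ext => x _; rewrite mulrA.
Qed.


Lemma Psi_sum k (I : Type) (r : seq I) (F : I -> ser) q :
  Psi k (fun a => \sum_(l <- r) F l a) q = \sum_(l <- r) Psi k (F l) q.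
Proof.
rewrite /Psi -wsum_sum; apply: wsum_ext => x _; by rewrite mulr_suml.
Qed.

Lemma PsiZ k c (f : ser) q : Psi k (fun a => c * f a) q = c * Psi k f q.
Proof. by rewrite /Psi -wsumZ; apply: wsum_ext => x _; rewrite mulrA. Qed.

Lemma Psi0 (y : ser) w : Psi 0 y w = (w == [::])%:R * y [::].
Proof.
rewrite /Psi (wsum_ext (G := fun x => ((w == [::])%:R * y x) * (x == [::])%:R)).
  rewrite wsum_delta /=.
  case: w => [|d w] /=; first by [].
  by rewrite mul0r.
move=> x _; rewrite /cnt; case: x => [|c x] /=.
  by rewrite mulr1 addn0 mulrC eq_sym.
by rewrite !mulr0.
Qed.

Lemma Psi_pow (u : ser) : primitive u -> forall k j w,
  Psi k (ser_pow u j) w = (k%:R) ^+ j * ser_pow u j w.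
Proof.
move=> hu; elim=> [|k IH] j w.
  rewrite Psi0; case: j => [|j].
    rewrite expr0 mul1r /= /ser_one eqxx mulr1.
    by case: w.
  have h0 : ser_pow u j.+1 [::] = 0 by rewrite (pow_small (prim0 hu)).
  by rewrite h0 mulr0 expr0n mul0r.
rewrite Psi_rec.
have HD : forall p, D (ser_pow u j) p =
   (fun a => \sum_(l < j.+1) ('C(j, l)%:R * ser_pow u l p) * ser_pow u (j - l) a).
  move=> p; apply: functional_extensionality => a; rewrite D_pow //.
  by apply: eq_bigr => l _; rewrite mulrA.
under eq_bigr do rewrite HD Psi_sum.
under eq_bigr do under eq_bigr do rewrite PsiZ IH.
rewrite exchange_big /=.
rewrite (eq_bigr (fun l : 'I_j.+1 => ('C(j, l)%:R * k%:R ^+ (j - l)) * ser_pow u j w)); last first.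
  move=> l _; have hl : (l <= j)%N by rewrite -ltnS.
  have -> : ser_pow u j w = ser_pow u (l + (j - l)) w by rewrite subnKC.
  rewrite pow_add /ser_mul mulr_sumr.
  apply: eq_bigr => i _; rewrite -!mulrA; congr (_ * _); by rewrite mulrCA.
rewrite -mulr_suml -natr1 exprDn; congr (_ * _); apply: eq_bigr => l _.
by rewrite expr1n mulr1 mulr_natl.
Qed.


Lemma masks_rcons m : perm_eq (masks m.+1)
  ([seq rcons b true | b <- masks m] ++ [seq rcons b false | b <- masks m]).
Proof.
elim: m => [|m IH]; first by [].
rewrite [masks m.+2]/=.
apply: perm_trans (perm_cat (perm_map (cons true) IH) (perm_map (cons false) IH)) _.
rewrite [masks m.+1]/= !map_cat -!map_comp -!catA perm_cat2l perm_catCA.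
exact: perm_refl.
Qed.

Definition Pw k c (y : word) : seq word :=
  [seq c :: (mask b y ++ t) | b <- masks (size y), t <- outs k (mask (map negb b) y)].

Fixpoint Mw k c (y : word) : seq word :=
  if k is k'.+1 then
    [seq (mask b y ++ [:: c]) ++ t | b <- masks (size y), t <- outs k (mask (map negb b) y)] ++
    [seq mask b y ++ t | b <- masks (size y), t <- Mw k' c (mask (map negb b) y)]
  else [::].

Lemma outs_cons k c y : outs k.+1 (c :: y) =
  Pw k c y ++ [seq mask b y ++ t | b <- masks (size y), t <- outs k (c :: mask (map negb b) y)].
Proof. by rewrite /= allpairs_cat !allpairs_mapl. Qed.

Lemma perm_allpairs_eqin (S : eqType) (s : seq S) (t u : S -> seq word)
  (f g : S -> word -> word) :
  {in s, forall b, map (f b) (t b) = map (g b) (u b)} ->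
  perm_eq [seq f b x | b <- s, x <- t b] [seq g b x | b <- s, x <- u b].
Proof.
move=> h; suff -> : [seq f b x | b <- s, x <- t b] = [seq g b x | b <- s, x <- u b].
  exact: perm_refl.
by congr flatten; apply/eq_in_map.
Qed.

Lemma outs_rcons k c y : perm_eq (outs k.+1 (rcons y c))
  ([seq (mask b y ++ [:: c]) ++ t | b <- masks (size y), t <- outs k (mask (map negb b) y)] ++
   [seq mask b y ++ t | b <- masks (size y), t <- outs k (rcons (mask (map negb b) y) c)]).
Proof.
rewrite /= size_rcons.
apply: perm_trans (perm_allpairs_dep _ (masks_rcons (size y)) (fun b _ => perm_refl _)) _.
rewrite allpairs_cat !allpairs_mapl.
apply: perm_cat; apply: perm_allpairs_eqin => b hb;
  by rewrite map_rcons !mask_rcons ?size_map ?(size_masks hb) ?cats0 ?cats1.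
Qed.

Lemma outs0_nil z t : t \in outs 0 z -> t = [::].
Proof. by case: z => [|c z] //=; rewrite inE => /eqP. Qed.

Lemma allpairs_nil (S T R : Type) (f : S -> T -> R) (s : seq S) :
  [seq f b t | b <- s, t <- [::]] = [::].
Proof. by elim: s. Qed.

Lemma F2 k c y :
  perm_eq (outs k.+1 (c :: y)) (Pw k c y ++ Mw k c y) /\
  perm_eq (outs k.+1 (rcons y c)) (map (rot 1) (Pw k c y) ++ Mw k c y).
Proof.
elim: k y => [|k IH] y.
  split.
    rewrite outs_cons /=.
    by rewrite perm_cat2l; elim: (masks (size y)).
  apply: perm_trans (outs_rcons 0 c y) _.
  rewrite [Mw 0 c y]/= cats0.
  rewrite (eq_allpairsr _ _ (t1 := fun b => outs 0 (rcons (mask (map negb b) y) c))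
      (t2 := fun _ => [::])); last by move=> b; case: (mask _ _).
  rewrite allpairs_nil cats0 /Pw map_allpairs.
  apply: perm_allpairs_eqin => b _; apply/eq_in_map => t /outs0_nil ->.
  by rewrite rot1_cons !cats0 cats1.
have HX : [seq mask b y ++ t | b <- masks (size y), t <- Pw k c (mask (map negb b) y)] =
  [seq (mask b y ++ [:: c]) ++ t | b <- masks (size y), t <- outs k.+1 (mask (map negb b) y)].
  congr flatten; apply: eq_map => b; rewrite /Pw [outs k.+1 _]/= !map_allpairs.
  by apply: eq_allpairs => b' t' /=; rewrite -catA.
have HX' : [seq mask b y ++ t | b <- masks (size y), t <- map (rot 1) (Pw k c (mask (map negb b) y))] =
  map (rot 1) (Pw k.+1 c y).
  rewrite [Pw k.+1 c y]/Pw map_allpairs; congr flatten; apply: eq_map => b.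
  rewrite [outs k.+1 _]/= /Pw -map_comp !map_allpairs.
  by apply: eq_allpairs => b1 t1 /=; rewrite !rot1_cons !rcons_cat.
split.
  rewrite outs_cons [Mw k.+1 c y]/= perm_cat2l -HX.
  apply: perm_trans (perm_allpairs_dep _ (perm_refl _) (fun b _ => (IH _).1)) _.
  by rewrite perm_allpairs_catr.
apply: perm_trans (outs_rcons k.+1 c y) _.
rewrite [Mw k.+1 c y]/= -HX'.
apply: perm_trans (perm_cat (perm_refl _)
   (perm_allpairs_dep _ (perm_refl _) (fun b _ => (IH _).2))) _.
rewrite perm_sym perm_catCA perm_cat2l perm_sym perm_allpairs_catr.
exact: perm_refl.
Qed.



Definition delta (v : word) : ser := fun w => (w == v)%:R.
Definition gen (x : word) : ser := fun w => (w == x)%:R - (w == rot 1 x)%:R.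
Definition Gspan (z : ser) : Prop :=
  exists s : seq (K * word), forall w, z w = \sum_(p <- s) p.1 * gen p.2 w.

Lemma G_ext f g : (forall w, f w = g w) -> Gspan f -> Gspan g.
Proof. by move=> h [s hs]; exists s => w; rewrite -h. Qed.

Lemma G0 : Gspan (fun _ => 0).
Proof. by exists [::] => w; rewrite big_nil. Qed.

Lemma G_add f g : Gspan f -> Gspan g -> Gspan (fun w => f w + g w).
Proof. by move=> [s hs] [t ht]; exists (s ++ t) => w; rewrite big_cat hs ht. Qed.

Lemma G_scale c f : Gspan f -> Gspan (fun w => c * f w).
Proof.
move=> [s hs]; exists [seq (c * p.1, p.2) | p <- s] => w.
by rewrite big_map hs mulr_sumr; apply: eq_bigr => p _; rewrite mulrA.
Qed.

Lemma G_sum (I : Type) (r : seq I) (F : I -> ser) :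
  (forall i, Gspan (F i)) -> Gspan (fun w => \sum_(i <- r) F i w).
Proof.
move=> h; elim: r => [|i r IH]; first by apply: G_ext G0 => w; rewrite big_nil.
by apply: G_ext (G_add (h i) IH) => w; rewrite big_cons.
Qed.

Lemma G_wsum L (F : word -> ser) :
  (forall x, Gspan (F x)) -> Gspan (fun w => wsum L (fun x => F x w)).
Proof.
elim: L F => [|L IH] F h /=; first exact: h.
by apply: G_sum => c; apply: IH => x; exact: h.
Qed.

Lemma G_gen x : Gspan (gen x).
Proof. by exists [:: (1, x)] => w; rewrite big_seq1 mul1r. Qed.

Lemma G_rot (v : word) r : (r <= size v)%N ->
  Gspan (fun w => delta v w - delta (rot r v) w).
Proof.
elim: r => [|r IH] h.
  by apply: G_ext G0 => w; rewrite rot0 subrr.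
apply: G_ext (G_add (IH (ltnW h)) (G_gen (rot r v))) => w.
by rewrite /gen /delta (rotS h) addrA subrK.
Qed.

Lemma sum_count_diff (f : word -> word) (s : seq word) w :
  (count_mem w s)%:R - (count_mem w (map f s))%:R =
  \sum_(q <- s) (1 : K) * ((w == q)%:R - (w == f q)%:R).
Proof.
elim: s => [|q s IH] /=; first by rewrite big_nil subrr.
rewrite big_cons -IH !natrD mul1r [q == w]eq_sym [f q == w]eq_sym.
by rewrite addrACA opprD.
Qed.

Definition rep k (x : word) : seq (K * word) :=
  if x is c :: y then (if k is k'.+1 then [seq (1, q) | q <- Pw k' c y] else [::])
  else [::].

Lemma wsum_cnt k x w : wsum (size w) (fun v => (v == x)%:R * cnt k v w) = cnt k x w.
Proof.
rewrite wsum_deltal; case: eqP => // /eqP h; by rewrite cnt0.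
Qed.

Lemma Psi_gen k x w : Psi k (gen x) w = \sum_(p <- rep k x) p.1 * gen p.2 w.
Proof.
rewrite /Psi /gen (wsum_ext (G := fun v => (v == x)%:R * cnt k v w - (v == rot 1 x)%:R * cnt k v w));
  last by move=> v _; rewrite mulrBl.
rewrite wsumB !wsum_cnt.
case: x => [|c y] /=; first by rewrite (_ : rot 1 [::] = [::] :> word) // subrr big_nil.
rewrite rot1_cons; case: k => [|k].
  rewrite big_nil /cnt /=; by case: y => [|d y] /=; rewrite subrr.
have [h1 h2] := F2 k c y.
rewrite /cnt (permP h1) (permP h2) !count_cat !natrD opprD addrACA subrr addr0.
by rewrite sum_count_diff big_map.
Qed.

Lemma Psi_G k g : Gspan g -> Gspan (Psi k g).
Proof.
move=> [s hs].
apply: (G_ext (f := fun w => \sum_(p <- s) p.1 * Psi k (gen p.2) w)).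
  move=> w; rewrite /Psi (wsum_ext (G := fun x => \sum_(p <- s) p.1 * (gen p.2 x * cnt k x w))).
    by rewrite wsum_sum; apply: eq_bigr => p _; rewrite wsumZ.
  by move=> x _; rewrite hs mulr_suml; apply: eq_bigr => p _; rewrite mulrA.
apply: G_sum => p; apply: G_scale; apply: (G_ext (f := fun w => \sum_(q <- rep k p.2) q.1 * gen q.2 w)).
  by move=> w; rewrite Psi_gen.
by exists (rep k p.2).
Qed.

Definition proj L (z : ser) : ser := fun w => if size w == L then z w else 0.

Lemma proj_G L g : Gspan g -> Gspan (proj L g).
Proof.
move=> [s hs].
apply: (G_ext (f := fun w => \sum_(p <- s) p.1 * (if size p.2 == L then gen p.2 w else 0))).
  move=> w; rewrite /proj hs; case: ifP => hw.
    apply: eq_bigr => p _; case: ifP => // hp; rewrite /gen.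
    case: (w =P p.2) => [E|_]; first by move: hp; rewrite -E hw.
    case: (w =P rot 1 p.2) => [E|_]; first by move: hp; rewrite -(size_rot 1) -E hw.
    by rewrite subrr.
  rewrite big1 // => p _; case: ifP => hp; last by rewrite mulr0.
  rewrite /gen; case: (w =P p.2) => [E|_]; first by move: hp; rewrite -E hw.
  case: (w =P rot 1 p.2) => [E|_]; first by move: hp; rewrite -(size_rot 1) -E hw.
  by rewrite subrr mulr0.
apply: G_sum => p; case: (size p.2 == L); apply: G_scale; [exact: G_gen|exact: G0].
Qed.


Lemma mul_delta a b w : ser_mul (delta a) (delta b) w = (w == a ++ b)%:R.
Proof.
rewrite /ser_mul /delta.
rewrite (eq_bigr (fun i : 'I_(size w).+1 => (a == take i w)%:R * (b == drop i w)%:R)); last first.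
  by move=> i _; rewrite !(eq_sym _ a) !(eq_sym _ b).
rewrite -(take_sum a w (fun i => (b == drop i w)%:R)) (eq_sym w) cat_eq.
by case: (a == _); case: (b == _); rewrite ?mulr1 ?mulr0.
Qed.

Lemma G_comm g : Gspan g -> comm_span g.
Proof.
move=> [s hs].
exists [seq (if p.2 is c :: y then (fun w => p.1 * delta [:: c] w, delta y)
             else (fun _ => 0, fun _ => 0)) | p <- s].
apply: functional_extensionality => w; rewrite hs big_map; apply: eq_bigr => [[al x]] _ /=.
case: x => [|c y] /=.
  rewrite /gen (_ : rot 1 [::] = [::] :> word) // subrr mulr0 /ser_mul.
  by rewrite !big1 ?subrr // => i _; rewrite mul0r.
rewrite mulZl mulZr !mul_delta /gen rot1_cons -cats1 /= mulrBr.
by [].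
Qed.

Definition Cl N (z : ser) : Prop :=
  exists g, Gspan g /\ forall w, (size w < N)%N -> z w = g w.

Lemma Cl_ext N z z' : (forall w, (size w < N)%N -> z w = z' w) -> Cl N z -> Cl N z'.
Proof. by move=> h [g [hg hz]]; exists g; split=> // w hw; rewrite -h // hz. Qed.

Lemma Cl_G N g : Gspan g -> Cl N g.
Proof. by move=> hg; exists g. Qed.

Lemma Cl_add N f g : Cl N f -> Cl N g -> Cl N (fun w => f w + g w).
Proof.
move=> [f' [hf ef]] [g' [hg eg]]; exists (fun w => f' w + g' w); split.
  exact: G_add.
by move=> w hw; rewrite ef ?eg.
Qed.

Lemma Cl_scale N c f : Cl N f -> Cl N (fun w => c * f w).
Proof.
move=> [f' [hf ef]]; exists (fun w => c * f' w); split; first exact: G_scale.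
by move=> w hw; rewrite ef.
Qed.

Lemma Cl_sum N (I : Type) (r : seq I) (F : I -> ser) :
  (forall i, Cl N (F i)) -> Cl N (fun w => \sum_(i <- r) F i w).
Proof.
move=> h; elim: r => [|i r IH].
  by apply: Cl_ext (Cl_G N G0) => w _; rewrite big_nil.
by apply: Cl_ext (Cl_add (h i) IH) => w _; rewrite big_cons.
Qed.

Lemma Cl_Psi N k z : Cl N z -> Cl N (Psi k z).
Proof.
move=> [g [hg ez]]; exists (Psi k g); split; first exact: Psi_G.
move=> w hw; rewrite /Psi; apply: wsum_ext => x sx; rewrite ez // sx //.
Qed.

Lemma Cl_proj N L z : Cl N z -> Cl N (proj L z).
Proof.
move=> [g [hg ez]]; exists (proj L g); split; first exact: proj_G.
by move=> w hw; rewrite /proj ez.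
Qed.


Lemma HW (F : word -> word -> K) i L w : (i <= L)%N ->
  wsum i (fun x => wsum (L - i) (fun y => F x y * delta (x ++ y) w)) =
  if size w == L then F (take i w) (drop i w) else 0.
Proof.
move=> hi; rewrite -(wsum_split (fun x y => F x y * delta (x ++ y) w) hi).
rewrite (wsum_ext (G := fun v => F (take i v) (drop i v) * (v == w)%:R)).
  by rewrite wsum_delta.
by move=> v _; rewrite cat_take_drop /delta eq_sym.
Qed.

Lemma sum_if (m : nat) (c : bool) (f : 'I_m -> K) :
  \sum_(i < m) (if c then f i else 0) = if c then \sum_(i < m) f i else 0.
Proof. by case: c => //; rewrite big1. Qed.

Lemma comm_pair N (a b : ser) : Cl N (fun w => ser_mul a b w - ser_mul b a w).
Proof.
pose g := fun w => \sum_(L < N) \sum_(i < L.+1) wsum i (fun x => wsum (L - i)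
   (fun y => a x * b y * (delta (x ++ y) w - delta (y ++ x) w))).
exists g; split.
  apply: G_sum => L; apply: G_sum => i; apply: G_wsum => x; apply: G_wsum => y.
  apply: G_scale; apply: (G_ext (f := fun w => delta (x ++ y) w - delta (rot (size x) (x ++ y)) w)).
    by move=> w; rewrite rot_size_cat.
  by apply: G_rot; rewrite size_cat leq_addr.
move=> w hw; rewrite /g.
have E : forall L : 'I_N, \sum_(i < L.+1) wsum i (fun x => wsum (L - i)
   (fun y => a x * b y * (delta (x ++ y) w - delta (y ++ x) w))) =
   if size w == L then \sum_(i < L.+1) (a (take i w) * b (drop i w) -
      b (take (L - i) w) * a (drop (L - i) w)) else 0.
  move=> L; rewrite -sum_if; apply: eq_bigr => i _.
  have hi : (i <= L)%N by rewrite -ltnS.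
  rewrite (wsum_ext (G := fun x => wsum (L - i) (fun y => a x * b y * delta (x ++ y) w) -
     wsum (L - i) (fun y => a x * b y * delta (y ++ x) w))); last first.
    by move=> x _; rewrite -wsumB; apply: wsum_ext => y _; rewrite mulrBr.
  rewrite wsumB HW // wsum_exch.
  have hLi : (L - i <= L)%N by rewrite leq_subr.
  have H2 : wsum (L - i) (fun y => wsum i (fun x => a x * b y * delta (y ++ x) w)) =
    if size w == L then b (take (L - i) w) * a (drop (L - i) w) else 0.
    have := HW (fun y x => a x * b y) w hLi; rewrite (subKn hi) => H.
    rewrite (_ : b _ * a _ = a (drop (L - i) w) * b (take (L - i) w)); last exact: mulrC.
    rewrite -H; apply: wsum_ext => y _; by apply: wsum_ext => x _.
  by rewrite H2; case: (size w == L); rewrite ?subrr.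
under eq_bigr do rewrite E.
rewrite (bigD1 (Ordinal hw)) //= eqxx [X in _ = _ + X]big1 ?addr0; last first.
  move=> L hL; case: (eqVneq (size w) (L : nat)) => [hL'|//]; by move: hL; rewrite -val_eqE /= -hL' eqxx.
rewrite sumrB /ser_mul; congr (_ - _).
rewrite (reindex_inj rev_ord_inj) /=; apply: eq_bigr => i _.
by rewrite subSS mulrC.
Qed.

Lemma Cl_comm N z : comm_span z -> Cl N z.
Proof.
move=> [s ->]; apply: Cl_sum => p; exact: comm_pair.
Qed.

Lemma Psi_sub k (f g : ser) w : Psi k (ser_sub f g) w = Psi k f w - Psi k g w.
Proof. by rewrite /Psi -wsumB; apply: wsum_ext => x _; rewrite /ser_sub mulrBl. Qed.

Lemma Psi_exp (u : ser) : primitive u -> forall k w,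
  Psi k (ser_exp u) w =
  \sum_(j < (size w).+1) (j`!%:R)^-1 * ((k%:R) ^+ j * ser_pow u j w).
Proof.
move=> hu k w; rewrite /Psi /ser_exp.
rewrite (wsum_ext (G := fun x => \sum_(j < (size w).+1) (j`!%:R)^-1 * (ser_pow u j x * cnt k x w))).
  rewrite wsum_sum; apply: eq_bigr => j _; rewrite wsumZ.
  by rewrite -(Psi_pow hu k j w).
by move=> x sx; rewrite sx mulr_suml; apply: eq_bigr => j _; rewrite mulrA.
Qed.


Definition VM L : 'M[K]_(L.+1) := Vandermonde L.+1 (\row_(k < L.+1) (k%:R : K)).
Definition ecol L m : 'cV[K]_(L.+1) :=
  \col_(j < L.+1) (if (j == m :> nat) then (m`!)%:R else 0).
Definition vbeta (L m : nat) (k : 'I_L.+1) : K := (invmx (VM L) *m ecol L m) k 0.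
Arguments vbeta : clear implicits.

Lemma natr_neq0 (hK : [pchar K] =i pred0) (m : nat) : m != 0%N -> (m%:R : K) != 0.
Proof. by move=> h; rewrite ((pcharf0P K).1 hK). Qed.

Lemma VM_unit (hK : [pchar K] =i pred0) L : VM L \in unitmx.
Proof.
rewrite unitmxE unitfE /VM det_Vandermonde; apply/prodf_neq0 => i _.
apply/prodf_neq0 => j hij; rewrite !mxE subr_eq0.
rewrite -subr_eq0 -natrB; last exact: ltnW.
by apply: natr_neq0 => //; rewrite subn_eq0 -ltnNge.
Qed.

Lemma vbetaP (hK : [pchar K] =i pred0) L m (j : 'I_L.+1) :
  \sum_(k < L.+1) (k%:R : K) ^+ j * vbeta L m k = if (j == m :> nat) then (m`!)%:R else 0.
Proof.
have := congr1 (fun M : 'M[K]_(L.+1, 1) => M j 0) (mulmxA (VM L) (invmx (VM L)) (ecol L m)).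
rewrite mulmxV ?VM_unit // mul1mx [ecol L m j 0]mxE => <-.
rewrite mxE; apply: eq_bigr => k _; by rewrite /vbeta /VM /Vandermonde !mxE.
Qed.

End Main.

Theorem theorem3p2 (K : fieldType) (hK : [pchar K] =i pred0) (n : nat)
    (u v : ser K n) :
  primitive u -> primitive v ->
  cyc_eq (ser_exp u) (ser_exp v) ->
  forall m : nat, cyc_eq (ser_pow u m) (ser_pow v m).
Proof.
move=> hu hv hE m N.
suff [g [hg eg]] : Cl N (ser_sub (ser_pow u m) (ser_pow v m)).
  by exists g; split; [exact: G_comm|exact: eg].
pose E := ser_sub (ser_exp u) (ser_exp v).
have ClE : Cl N E.
  have [s [hs es]] := hE N.
  by apply: Cl_ext (Cl_comm N hs) => w hw; rewrite /E es.
pose T := fun w => \sum_(L < N) \sum_(k < L.+1) @vbeta K L m k * proj L (Psi k E) w.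
have ClT : Cl N T.
  apply: Cl_sum => L; apply: Cl_sum => k; apply: Cl_scale; apply: Cl_proj; exact: Cl_Psi.
apply: Cl_ext ClT => w hw.
rewrite /T (bigD1 (Ordinal hw)) //= [X in _ + X = _]big1 ?addr0; last first.
  move=> L hL; apply: big1 => k _; rewrite /proj.
  case: ifP => [/eqP hL'|_]; last by rewrite mulr0.
  by case/negP: hL; apply/eqP; apply: val_inj; rewrite /= hL'.
rewrite /proj eqxx.
under eq_bigr => k _ do rewrite /E Psi_sub (Psi_exp hu) (Psi_exp hv) -sumrB mulr_sumr.
rewrite exchange_big /=.
rewrite (eq_bigr (fun j : 'I_(size w).+1 => (j`!%:R)^-1 * (ser_pow u j w - ser_pow v j w) *
   (if (j == m :> nat) then m`!%:R else 0))); last first.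
  move=> j _; rewrite -(vbetaP hK) mulr_sumr; apply: eq_bigr => k _.
  rewrite -mulrBr -mulrBr; ring.
rewrite /ser_sub; case: (leqP m (size w)) => hm.
  have hm' : (m < (size w).+1)%N by [].
  rewrite (bigD1 (Ordinal hm')) //= eqxx big1 ?addr0 => [|j hj].
    rewrite mulrAC mulVf ?mul1r //; apply: natr_neq0 => //; by rewrite -lt0n fact_gt0.
  have -> : (j == m :> nat) = false.
    by apply/negP => /eqP hjm; case/negP: hj; apply/eqP; apply: val_inj.
  by rewrite mulr0.
rewrite big1 => [|j _].
  by rewrite !(pow_small (prim0 _)) // subrr.
have -> : (j == m :> nat) = false.
  by apply/negP => /eqP hjm; move: (ltn_ord j); rewrite hjm ltnS leqNgt hm.
by rewrite mulr0.
Qed.
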